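(* There exist a separable metrizable $g$-reversible topological group $G$ and a closed subgroup $H$ of $G$ such that $H$ is countable and precompact and $H$ (with the subspace topology) is not $g$-reversible.
   Context: All topological groups are assumed Hausdorff. A topological group $G$ is called $g$-reversible if every continuous automorphism of $G$ (i.e. every continuous group isomorphism of $G$ onto itself) is an open map. A topological group is precompact if for every neighbourhood $U$ of the identity there is a finite $F$ with $FU=G$. *)

(* Defs.v *)
From Stdlib Require Import Reals List.
Open Scope R_scope.

Record TopGrp := {
  carrier :> Type;
  gmul : carrier -> carrier -> carrier;
  ginv : carrier -> carrier;
  gone : carrier;
  opn : (carrier -> Prop) -> Prop
}.

Arguments gmul {t}.
Arguments ginv {t}.
Arguments gone {t}.
Arguments opn {t}.

Definition is_group (G : TopGrp) : Prop :=
  (forall x y z : G, gmul x (gmul y z) = gmul (gmul x y) z) /\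
  (forall x : G, gmul gone x = x /\ gmul x gone = x) /\
  (forall x : G, gmul (ginv x) x = gone /\ gmul x (ginv x) = gone).

Definition is_topology (G : TopGrp) : Prop :=
  opn (fun _ : G => True) /\
  (forall U V : G -> Prop, opn U -> opn V -> opn (fun x => U x /\ V x)) /\
  (forall F : (G -> Prop) -> Prop, (forall U, F U -> opn U) ->
     opn (fun x => exists U, F U /\ U x)).

Definition hausdorff (G : TopGrp) : Prop :=
  forall x y : G, x <> y ->
    exists U V : G -> Prop, opn U /\ opn V /\ U x /\ V y /\
      (forall z, U z -> V z -> False).

(* continuity of multiplication G x G -> G for the product topology *)
Definition mul_continuous (G : TopGrp) : Prop :=
  forall (W : G -> Prop) (x y : G), opn W -> W (gmul x y) ->
    exists U V : G -> Prop, opn U /\ opn V /\ U x /\ V y /\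
      (forall u v, U u -> V v -> W (gmul u v)).

Definition continuous {G : TopGrp} (f : G -> G) : Prop :=
  forall U : G -> Prop, opn U -> opn (fun x => U (f x)).

Definition open_map {G : TopGrp} (f : G -> G) : Prop :=
  forall U : G -> Prop, opn U -> opn (fun y => exists x, U x /\ f x = y).

Definition is_topological_group (G : TopGrp) : Prop :=
  is_group G /\ is_topology G /\ hausdorff G /\ mul_continuous G /\
  continuous (@ginv G).

Definition automorphism {G : TopGrp} (f : G -> G) : Prop :=
  (forall x y : G, f (gmul x y) = gmul (f x) (f y)) /\
  (forall x y : G, f x = f y -> x = y) /\
  (forall y : G, exists x, f x = y).

Definition g_reversible (G : TopGrp) : Prop :=
  forall f : G -> G, automorphism f -> continuous f -> open_map f.

Definition neighbourhood_of_one (G : TopGrp) (U : G -> Prop) : Prop :=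
  exists V : G -> Prop, opn V /\ V gone /\ (forall x, V x -> U x).

Definition precompact (G : TopGrp) : Prop :=
  forall U : G -> Prop, neighbourhood_of_one G U ->
    exists F : list G, forall x : G,
      exists a u, In a F /\ U u /\ x = gmul a u.

Definition metrizable (G : TopGrp) : Prop :=
  exists d : G -> G -> R,
    (forall x y, 0 <= d x y) /\
    (forall x y, d x y = 0 <-> x = y) /\
    (forall x y, d x y = d y x) /\
    (forall x y z, d x z <= d x y + d y z) /\
    (forall U : G -> Prop, opn U <->
       (forall x, U x -> exists eps, 0 < eps /\ forall y, d x y < eps -> U y)).

(* has a countable dense subset (given as the range of a sequence; G is
   nonempty, so this covers finite dense sets too) *)
Definition separable (G : TopGrp) : Prop :=
  exists s : nat -> G, forall U : G -> Prop, opn U -> (exists x, U x) ->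
    exists n, U (s n).

Record subgroup (G : TopGrp) := {
  sg_pred : G -> Prop;
  sg_one : sg_pred gone;
  sg_mul : forall x y, sg_pred x -> sg_pred y -> sg_pred (gmul x y);
  sg_inv : forall x, sg_pred x -> sg_pred (ginv x)
}.

Arguments sg_pred {G}.

Definition subTopGrp (G : TopGrp) (H : subgroup G) : TopGrp := {|
  carrier := { x : G | sg_pred H x };
  gmul := fun a b => exist _ (gmul (proj1_sig a) (proj1_sig b))
                        (sg_mul G H _ _ (proj2_sig a) (proj2_sig b));
  ginv := fun a => exist _ (ginv (proj1_sig a)) (sg_inv G H _ (proj2_sig a));
  gone := exist _ gone (sg_one G H);
  opn := fun U => exists V : G -> Prop, opn V /\
           forall a, U a <-> V (proj1_sig a)
|}.

Definition closed_subset {G : TopGrp} (A : G -> Prop) : Prop :=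
  opn (fun x => ~ A x).

Definition countable_set {G : TopGrp} (A : G -> Prop) : Prop :=
  exists s : nat -> G, forall x, A x -> exists n, s n = x.

(* Main.v *)
Require Import Defs.
From Stdlib Require Import Reals List ZArith Lia Lra Arith Bool.
From Stdlib Require Import Classical ClassicalEpsilon FunctionalExtensionality ProofIrrelevance.
From Stdlib Require Import Cantor.

Lemma sig_ext {A : Type} {P : A -> Prop} (a b : {x | P x}) :
  proj1_sig a = proj1_sig b -> a = b.
Proof. destruct a as [a pa], b as [b pb]; simpl; intros ->; f_equal; apply proof_irrelevance. Qed.

Definition finsupp (h : Z -> bool) : Prop :=
  exists B, forall k, (B < Z.abs k)%Z -> h k = false.
Definition Hc := {h : Z -> bool | finsupp h}.
Definition ev (a : Hc) (k : Z) : bool := proj1_sig a k.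

Lemma Hc_eq (a b : Hc) : (forall k, ev a k = ev b k) -> a = b.
Proof. intros H; apply sig_ext; apply functional_extensionality; exact H. Qed.

Lemma fs_z : finsupp (fun _ => false). Proof. exists 0%Z; auto. Qed.
Definition hz : Hc := exist _ _ fs_z.

Lemma fs_x (a b : Hc) : finsupp (fun k => xorb (ev a k) (ev b k)).
Proof.
  destruct a as [a [A HA]], b as [b [B HB]]; unfold ev; simpl.
  exists (Z.max A B); intros k Hk. rewrite HA, HB by lia. reflexivity.
Qed.
Definition hx (a b : Hc) : Hc := exist _ _ (fs_x a b).

Lemma fs_s (n : Z) (a : Hc) : finsupp (fun k => ev a (k - n)).
Proof.
  destruct a as [a [A HA]]; unfold ev; simpl.
  exists (A + Z.abs n)%Z; intros k Hk. apply HA. lia.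
Qed.
Definition hs (n : Z) (a : Hc) : Hc := exist _ _ (fs_s n a).

Lemma fs_e (j : Z) : finsupp (fun k => Z.eqb k j).
Proof. exists (Z.abs j); intros k Hk. apply Z.eqb_neq. lia. Qed.
Definition he (j : Z) : Hc := exist _ _ (fs_e j).

Lemma ev_hz k : ev hz k = false. Proof. reflexivity. Qed.
Lemma ev_hx a b k : ev (hx a b) k = xorb (ev a k) (ev b k). Proof. reflexivity. Qed.
Lemma ev_hs n a k : ev (hs n a) k = ev a (k - n). Proof. reflexivity. Qed.
Lemma ev_he j k : ev (he j) k = Z.eqb k j. Proof. reflexivity. Qed.

Lemma hs0 a : hs 0 a = a.
Proof. apply Hc_eq; intro k; rewrite ev_hs; f_equal; lia. Qed.
Lemma hss m n a : hs m (hs n a) = hs (m + n) a.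
Proof. apply Hc_eq; intro k; rewrite !ev_hs; f_equal; lia. Qed.
Lemma hs_hx n a b : hs n (hx a b) = hx (hs n a) (hs n b).
Proof. apply Hc_eq; intro k; reflexivity. Qed.
Lemma hs_hz n : hs n hz = hz. Proof. apply Hc_eq; intro k; reflexivity. Qed.
Lemma hxA a b c : hx a (hx b c) = hx (hx a b) c.
Proof. apply Hc_eq; intro k; rewrite !ev_hx; symmetry; apply xorb_assoc_reverse. Qed.
Lemma hx0l a : hx hz a = a. Proof. apply Hc_eq; intro k; reflexivity. Qed.
Lemma hx0r a : hx a hz = a. Proof. apply Hc_eq; intro k; rewrite ev_hx; apply xorb_false_r. Qed.
Lemma hxx a : hx a a = hz. Proof. apply Hc_eq; intro k; rewrite ev_hx; apply xorb_nilpotent. Qed.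
Lemma hxC a b : hx a b = hx b a. Proof. apply Hc_eq; intro k; rewrite !ev_hx; apply xorb_comm. Qed.

Definition G0 := (Hc * Z)%type.
Definition gm (x y : G0) : G0 := (hx (fst x) (hs (snd x) (fst y)), (snd x + snd y)%Z).
Definition gi (x : G0) : G0 := (hs (- snd x) (fst x), (- snd x)%Z).
Definition ge : G0 := (hz, 0%Z).

Lemma gmA x y z : gm x (gm y z) = gm (gm x y) z.
Proof.
  destruct x as [a m], y as [b n], z as [c p]; unfold gm; simpl.
  f_equal; [|lia]. rewrite hs_hx, hss, hxA. reflexivity.
Qed.
Lemma gm1l x : gm ge x = x.
Proof. destruct x as [a m]; unfold gm, ge; simpl. rewrite hs0, hx0l. reflexivity. Qed.
Lemma gm1r x : gm x ge = x.
Proof. destruct x as [a m]; unfold gm, ge; simpl. rewrite hs_hz, hx0r, Z.add_0_r. reflexivity. Qed.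
Lemma gmVl x : gm (gi x) x = ge.
Proof. destruct x as [a m]; unfold gm, gi, ge; simpl. rewrite hxx. f_equal. lia. Qed.
Lemma gmVr x : gm x (gi x) = ge.
Proof. destruct x as [a m]; unfold gm, gi, ge; simpl. rewrite hss.
  replace (m + - m)%Z with 0%Z by lia. rewrite hs0, hxx. reflexivity. Qed.

Lemma gi_gm x y : gi (gm x y) = gm (gi y) (gi x).
Proof.
  rewrite <- (gm1l (gm (gi y) (gi x))). rewrite <- (gmVl (gm x y)).
  rewrite <- !gmA. rewrite (gmA y (gi y)), gmVr, gm1l, gmVr, gm1r. reflexivity.
Qed.
Lemma gii x : gi (gi x) = x.
Proof. rewrite <- (gm1l (gi (gi x))), <- (gmVr x), <- gmA, gmVr, gm1r. reflexivity. Qed.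
Lemma gi1 : gi ge = ge. Proof. rewrite <- (gm1l (gi ge)). apply gmVr. Qed.
Lemma gm_cancel_l x y z : gm x y = gm x z -> y = z.
Proof. intros H. rewrite <- (gm1l y), <- (gm1l z), <- (gmVl x), <- !gmA, H. reflexivity. Qed.
Lemma gi_unique x y : gm x y = ge -> y = gi x.
Proof. intros H. apply (gm_cancel_l x). rewrite H, gmVr. reflexivity. Qed.

Definition V (N : nat) (x : G0) : Prop :=
  snd x = 0%Z /\ forall k, (Z.abs k <= Z.of_nat N)%Z -> ev (fst x) k = false.

Lemma V_mono n m x : (n <= m)%nat -> V m x -> V n x.
Proof. intros Hnm [H1 H2]; split; auto. intros k Hk; apply H2; lia. Qed.
Lemma V_one n : V n ge. Proof. split; reflexivity. Qed.
Lemma V_mul n x y : V n x -> V n y -> V n (gm x y).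
Proof.
  destruct x as [a p], y as [b q]; intros [H1 H2] [H3 H4]; simpl in *; subst.
  split; simpl; [lia|]. intros k Hk. rewrite H2, Z.sub_0_r, H4 by lia. reflexivity.
Qed.
Lemma V_inv n x : V n x -> V n (gi x).
Proof.
  destruct x as [a p]; intros [H1 H2]; simpl in *; subst.
  split; simpl; [lia|]. intros k Hk. apply H2. lia.
Qed.
Lemma V_all x : (forall n, V n x) -> x = ge.
Proof.
  destruct x as [a p]; intros H. destruct (H 0%nat) as [H1 _]; simpl in H1; subst.
  unfold ge; f_equal. apply Hc_eq; intro k. destruct (H (Z.to_nat (Z.abs k))) as [_ H2].
  apply H2. lia.
Qed.
Lemma V_conj g N : exists M, forall v, V M v -> V N (gm (gm (gi g) v) g).
Proof.
  destruct g as [a m]. exists (N + Z.to_nat (Z.abs m))%nat.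
  intros [b p] [H1 H2]; simpl in *; subst. split; simpl; [lia|].
  intros k Hk. unfold ev; simpl. fold (ev b). fold (ev a).
  rewrite H2 by lia. replace (k - (- m + 0))%Z with (k - - m)%Z by lia.
  destruct (proj1_sig a (k - - m)%Z); reflexivity.
Qed.

Open Scope R_scope.
Definition small (N : nat) : R := / INR (S N).
Lemma small_pos N : 0 < small N.
Proof. unfold small. apply Rinv_0_lt_compat, lt_0_INR; lia. Qed.
Lemma small_le1 N : small N <= 1.
Proof. unfold small. rewrite <- Rinv_1. apply Rinv_le_contravar; [lra|].
  rewrite S_INR. pose proof (pos_INR N); lra. Qed.
Lemma small_le N n : (N <= n)%nat <-> small n <= small N.
Proof.
  unfold small; split; intros H.
  - apply Rinv_le_contravar; [apply lt_0_INR; lia|]. apply le_INR; lia.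
  - destruct (le_lt_dec N n) as [h|h]; auto. exfalso.
    assert (/ INR (S N) < / INR (S n)); [|lra].
    apply Rinv_lt_contravar. apply Rmult_lt_0_compat; apply lt_0_INR; lia.
    apply lt_INR; lia.
Qed.
Lemma small_arch eps : 0 < eps -> exists N, small N < eps.
Proof.
  intros He. destruct (archimed_cor1 eps He) as [N [H1 H2]]. exists N.
  eapply Rle_lt_trans; [|exact H1]. unfold small.
  apply Rinv_le_contravar; [apply lt_0_INR; lia|]. apply le_INR; lia.
Qed.

Definition levP (x : G0) := exists n, V n x /\ ~ V (S n) x.
Definition nu (x : G0) : R :=
  match excluded_middle_informative (levP x) with
  | left H => small (proj1_sig (constructive_indefinite_description _ H))
  | right _ => if excluded_middle_informative (V 0 x) then 0 else 2
  end.

Lemma nu_spec x : (nu x = 0 /\ x = ge) \/ (nu x = 2 /\ ~ V 0 x) \/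
  (exists n, nu x = small n /\ V n x /\ ~ V (S n) x).
Proof.
  unfold nu. destruct (excluded_middle_informative (levP x)) as [H|H].
  - right; right. destruct (constructive_indefinite_description _ H) as [n Hn]; simpl.
    exists n; split; auto.
  - destruct (excluded_middle_informative (V 0 x)) as [H0|H0].
    + left; split; auto. apply V_all. intro n; induction n; auto.
      apply NNPP; intro Hc. apply H; exists n; auto.
    + right; left; auto.
Qed.

Lemma nu_C N x : V N x <-> nu x <= small N.
Proof.
  destruct (nu_spec x) as [[H1 H2]|[[H1 H2]|[n [H1 [H2 H3]]]]]; rewrite H1.
  - subst; split; intros _; [pose proof (small_pos N); lra | apply V_one].
  - split; intros H.
    + exfalso; apply H2; eapply V_mono; [|exact H]; lia.
    + pose proof (small_le1 N); lra.
  - split; intros H.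
    + apply small_le. destruct (le_lt_dec N n); auto. exfalso; apply H3.
      eapply V_mono; [|exact H]; lia.
    + apply small_le in H. eapply V_mono; [exact H|exact H2].
Qed.

Lemma nu_nonneg x : 0 <= nu x.
Proof. destruct (nu_spec x) as [[H1 _]|[[H1 _]|[n [H1 _]]]]; rewrite H1;
  [lra|lra|pose proof (small_pos n); lra]. Qed.
Lemma nu_le2 x : nu x <= 2.
Proof. destruct (nu_spec x) as [[H1 _]|[[H1 _]|[n [H1 _]]]]; rewrite H1;
  [lra|lra|pose proof (small_le1 n); lra]. Qed.
Lemma nu_zero x : nu x = 0 <-> x = ge.
Proof.
  destruct (nu_spec x) as [[H1 H2]|[[H1 H2]|[n [H1 [H2 H3]]]]]; rewrite H1.
  - tauto.
  - split; intros H; [lra|]. subst; exfalso; apply H2, V_one.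
  - split; intros H; [pose proof (small_pos n); lra|]. subst; exfalso; apply H3, V_one.
Qed.
Lemma nu_ge : nu ge = 0. Proof. apply nu_zero; reflexivity. Qed.

Lemma nu_inv_le x : nu (gi x) <= nu x.
Proof.
  destruct (nu_spec x) as [[H1 H2]|[[H1 H2]|[n [H1 [H2 H3]]]]]; rewrite H1.
  - subst. rewrite gi1, nu_ge. lra.
  - apply nu_le2.
  - apply nu_C. apply V_inv; auto.
Qed.
Lemma nu_inv x : nu (gi x) = nu x.
Proof. apply Rle_antisym; [apply nu_inv_le|]. rewrite <- (gii x) at 1. apply nu_inv_le. Qed.

Lemma nu_mul_le x y z : nu x <= nu z -> nu y <= nu z -> nu (gm x y) <= nu z.
Proof.
  intros Hx Hy.
  destruct (nu_spec z) as [[H1 H2]|[[H1 H2]|[n [H1 [H2 H3]]]]]; rewrite H1 in *.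
  - assert (nu x = 0) by (pose proof (nu_nonneg x); lra).
    assert (nu y = 0) by (pose proof (nu_nonneg y); lra).
    apply nu_zero in H, H0; subst. rewrite gm1l, nu_ge; lra.
  - apply nu_le2.
  - apply nu_C. apply V_mul; apply nu_C; auto.
Qed.
Lemma nu_tri x y : nu (gm x y) <= nu x + nu y.
Proof.
  pose proof (nu_nonneg x); pose proof (nu_nonneg y).
  destruct (Rle_dec (nu x) (nu y)).
  - pose proof (nu_mul_le x y y r (Rle_refl _)); lra.
  - pose proof (nu_mul_le x y x (Rle_refl _) ltac:(lra)); lra.
Qed.

Definition d (x y : G0) : R := nu (gm (gi x) y).
Definition opn0 (U : G0 -> Prop) : Prop :=
  forall x, U x -> exists eps, 0 < eps /\ forall y, d x y < eps -> U y.

Lemma d_C N x y : V N (gm (gi x) y) <-> d x y <= small N.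
Proof. apply nu_C. Qed.
Lemma d_tri x y z : d x z <= d x y + d y z.
Proof.
  unfold d. replace (gm (gi x) z) with (gm (gm (gi x) y) (gm (gi y) z)).
  apply nu_tri. rewrite <- gmA, (gmA y), gmVr, gm1l. reflexivity.
Qed.
Lemma d_sym x y : d x y = d y x.
Proof. unfold d. rewrite <- nu_inv, gi_gm, gii. reflexivity. Qed.
Lemma d_nonneg x y : 0 <= d x y. Proof. apply nu_nonneg. Qed.
Lemma d_zero x y : d x y = 0 <-> x = y.
Proof.
  unfold d; rewrite nu_zero. split; intros H.
  - rewrite <- (gm1r x), <- H, gmA, gmVr, gm1l. reflexivity.
  - subst; apply gmVl.
Qed.
Lemma ball_open x r : opn0 (fun y => d x y < r).
Proof.
  intros y Hy. exists (r - d x y); split; [lra|]. intros z Hz.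
  pose proof (d_tri x y z); lra.
Qed.
Lemma d_small N x y : d x y < small N -> V N (gm (gi x) y).
Proof. intros H; apply d_C; lra. Qed.

Definition LG : TopGrp := {| carrier := G0; gmul := gm; ginv := gi; gone := ge; opn := opn0 |}.

Lemma LG_group : is_group LG.
Proof.
  split; [|split]; simpl.
  - apply gmA.
  - intro x; split; [apply gm1l|apply gm1r].
  - intro x; split; [apply gmVl|apply gmVr].
Qed.

Lemma LG_top : is_topology LG.
Proof.
  split; [|split]; simpl.
  - intros x _; exists 1; split; auto; lra.
  - intros U W HU HW x [Ux Wx].
    destruct (HU x Ux) as [e1 [He1 H1]], (HW x Wx) as [e2 [He2 H2]].
    exists (Rmin e1 e2); split; [apply Rmin_pos; auto|].
    intros y Hy; split; [apply H1|apply H2]; pose proof (Rmin_l e1 e2); pose proof (Rmin_r e1 e2); lra.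
  - intros F HF x [U [FU Ux]].
    destruct (HF U FU x Ux) as [e [He H]]. exists e; split; auto.
    intros y Hy; exists U; split; auto.
Qed.

Lemma LG_haus : hausdorff LG.
Proof.
  intros x y Hxy; simpl in *.
  assert (Hd : 0 < d x y).
  { pose proof (d_nonneg x y). destruct (Req_dec (d x y) 0) as [h|h].
    - apply d_zero in h; contradiction.
    - lra. }
  exists (fun z => d x z < d x y / 2), (fun z => d y z < d x y / 2).
  split; [apply ball_open|]. split; [apply ball_open|].
  split; [rewrite (proj2 (d_zero x x) eq_refl); lra|].
  split; [rewrite (proj2 (d_zero y y) eq_refl); lra|].
  intros z H1 H2. pose proof (d_tri x z y). rewrite (d_sym z y) in H. lra.
Qed.

Lemma LG_mul : mul_continuous LG.
Proof.
  intros W x y HW Hxy; simpl in *.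
  destruct (HW _ Hxy) as [e [He H]].
  destruct (small_arch e He) as [N HN].
  destruct (V_conj y N) as [M HM].
  exists (fun u => d x u < small M), (fun v => d y v < small N).
  split; [apply ball_open|]. split; [apply ball_open|].
  split; [rewrite (proj2 (d_zero x x) eq_refl); apply small_pos|].
  split; [rewrite (proj2 (d_zero y y) eq_refl); apply small_pos|].
  intros u v Hu Hv. apply H.
  apply d_small in Hu, Hv. apply HM in Hu.
  assert (Hv2 := V_mul _ _ _ Hu Hv).
  apply nu_C in Hv2. eapply Rle_lt_trans; [|exact HN]. unfold d.
  replace (gm (gi (gm x y)) (gm u v)) with
    (gm (gm (gm (gi y) (gm (gi x) u)) y) (gm (gi y) v)); [exact Hv2|].
  rewrite gi_gm. rewrite <- !gmA. f_equal. f_equal. rewrite (gmA y (gi y)), gmVr, gm1l.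
  reflexivity.
Qed.

Lemma LG_inv : continuous (@ginv LG).
Proof.
  intros U HU x Hx; simpl in *.
  destruct (HU _ Hx) as [e [He H]].
  destruct (small_arch e He) as [N HN].
  destruct (V_conj (gi x) N) as [M HM].
  exists (small M); split; [apply small_pos|].
  intros y Hy. apply H. apply d_small, V_inv, HM in Hy.
  apply nu_C in Hy. eapply Rle_lt_trans; [|exact HN].
  unfold d. revert Hy.
  replace (gm (gm (gi (gi x)) (gi (gm (gi x) y))) (gi x)) with (gm (gi (gi x)) (gi y)); auto.
  rewrite gi_gm, gii. rewrite <- !gmA, gmVr, gm1r. reflexivity.
Qed.

Lemma LG_tg : is_topological_group LG.
Proof. split; [apply LG_group|split; [apply LG_top|split; [apply LG_haus|split; [apply LG_mul|apply LG_inv]]]]. Qed.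

Lemma LG_metr : metrizable LG.
Proof.
  exists d. split; [apply d_nonneg|]. split; [apply d_zero|]. split; [apply d_sym|].
  split; [apply d_tri|]. intros U; simpl; reflexivity.
Qed.

Definition code (k : Z) : nat := Z.to_nat (if (0 <=? k)%Z then 2*k else -2*k-1)%Z.
Lemma code_ge k : (Z.abs k <= Z.of_nat (code k))%Z.
Proof. unfold code. destruct (Z.leb_spec 0 k); rewrite Z2Nat.id; lia. Qed.
Lemma code_le k : (Z.of_nat (code k) <= 2 * Z.abs k)%Z.
Proof. unfold code. destruct (Z.leb_spec 0 k); rewrite Z2Nat.id; lia. Qed.
Lemma code_inj k l : code k = code l -> k = l.
Proof.
  intros H. apply (f_equal Z.of_nat) in H. unfold code in H.
  destruct (Z.leb_spec 0 k), (Z.leb_spec 0 l); rewrite !Z2Nat.id in H; lia.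
Qed.

Lemma fs_dec (n : nat) : finsupp (fun k => Nat.testbit n (code k)).
Proof.
  exists (Z.of_nat n); intros k Hk. apply Nat.bits_above_log2.
  pose proof (Nat.log2_le_lin n ltac:(lia)). pose proof (code_ge k). lia.
Qed.
Definition dec (n : nat) : Hc := exist _ _ (fs_dec n).

Lemma enc_nat L : forall f : nat -> bool, (forall j, (L <= j)%nat -> f j = false) ->
  exists n, (n < 2 ^ L)%nat /\ forall j, Nat.testbit n j = f j.
Proof.
  induction L; intros f Hf.
  - exists 0%nat; split; [simpl; lia|]. intro j; rewrite Hf by lia. apply Nat.bits_0.
  - destruct (IHL (fun j => f (S j))) as [n [Hn Hb]]. { intros j Hj; apply Hf; lia. }
    destruct (f 0%nat) eqn:E.
    + exists (2 * n + 1)%nat; split; [rewrite Nat.pow_succ_r'; lia|].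
      intros [|j]; [rewrite Nat.testbit_odd_0; auto|].
      rewrite Nat.testbit_odd_succ by lia. apply Hb.
    + exists (2 * n)%nat; split; [rewrite Nat.pow_succ_r'; lia|].
      intros [|j]; [rewrite Nat.testbit_even_0; auto|].
      rewrite Nat.testbit_even_succ by lia. apply Hb.
Qed.

Lemma enc_Hc (r : Hc) (B : nat) : (forall k, (Z.of_nat B < Z.abs k)%Z -> ev r k = false) ->
  exists n, (n < 2 ^ (2 * B + 1))%nat /\ dec n = r.
Proof.
  intros HB.
  set (f := fun j => if excluded_middle_informative (exists k, code k = j /\ ev r k = true)
                     then true else false).
  destruct (enc_nat (2 * B + 1) f) as [n [Hn Hb]].
  - intros j Hj. unfold f. destruct (excluded_middle_informative _) as [[k [H1 H2]]|]; auto.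
    exfalso. destruct (Z.le_gt_cases (Z.abs k) (Z.of_nat B)).
    + pose proof (code_le k). lia.
    + rewrite HB in H2 by lia. discriminate.
  - exists n; split; auto. apply Hc_eq; intro k. unfold dec, ev at 1; simpl.
    rewrite Hb. unfold f. destruct (excluded_middle_informative _) as [[k' [H1 H2]]|H].
    + apply code_inj in H1; subst; auto.
    + destruct (ev r k) eqn:E; auto. exfalso; apply H; exists k; auto.
Qed.

Definition enumG (m : nat) : G0 :=
  let (p, q) := Cantor.of_nat m in let (a, b) := Cantor.of_nat q in
  (dec p, (Z.of_nat a - Z.of_nat b)%Z).

Lemma enumG_surj x : exists m, enumG m = x.
Proof.
  destruct x as [r z]. destruct (proj2_sig r) as [Bz HB].
  destruct (enc_Hc r (Z.to_nat Bz)) as [n [_ Hn]].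
  { intros k Hk. apply HB. lia. }
  exists (Cantor.to_nat (n, Cantor.to_nat (Z.to_nat z, Z.to_nat (- z)))).
  unfold enumG. rewrite !Cantor.cancel_of_to. rewrite Hn. f_equal. lia.
Qed.

Lemma LG_sep : separable LG.
Proof.
  exists enumG. intros U _ [x Ux]. destruct (enumG_surj x) as [m Hm]. exists m. simpl. rewrite Hm; auto.
Qed.

Lemma Hs_one : snd ge = 0%Z. Proof. reflexivity. Qed.
Lemma Hs_mul (x y : G0) : snd x = 0%Z -> snd y = 0%Z -> snd (gm x y) = 0%Z.
Proof. simpl; lia. Qed.
Lemma Hs_inv (x : G0) : snd x = 0%Z -> snd (gi x) = 0%Z.
Proof. simpl; lia. Qed.
Definition Hs : subgroup LG := {| sg_pred := fun x : LG => snd x = 0%Z;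
  sg_one := Hs_one; sg_mul := Hs_mul; sg_inv := Hs_inv |}.

Lemma Hs_closed : closed_subset (sg_pred Hs).
Proof.
  simpl. intros x Hx. exists (small 0); split; [apply small_pos|].
  intros y Hy. apply d_small in Hy. destruct Hy as [H1 _]. simpl in H1. simpl in Hx. lia.
Qed.

Lemma Hs_count : countable_set (sg_pred Hs).
Proof. exists enumG. intros x _. apply enumG_surj. Qed.

Lemma fs_restr (h : Hc) (N : nat) :
  finsupp (fun k => if (Z.abs k <=? Z.of_nat N)%Z then ev h k else false).
Proof. exists (Z.of_nat N); intros k Hk. destruct (Z.leb_spec (Z.abs k) (Z.of_nat N)); auto; lia. Qed.
Definition restr h N : Hc := exist _ _ (fs_restr h N).

Lemma Hs_precompact : precompact (subTopGrp LG Hs).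
Proof.
  intros U [V0 [[W [HW HVW]] [V1 HVU]]].
  assert (W ge) by (apply (HVW _ ) in V1; exact V1).
  destruct (HW _ H) as [e [He Hb]].
  destruct (small_arch e He) as [N HN].
  exists (map (fun n => exist (fun x : LG => snd x = 0%Z) (dec n, 0%Z) eq_refl)
            (seq 0 (2 ^ (2 * N + 1)))).
  intros [[h z] Hz]. simpl in Hz. subst z.
  destruct (enc_Hc (restr h N) N) as [n [Hn Hd]].
  { intros k Hk. unfold restr, ev at 1; simpl. destruct (Z.leb_spec (Z.abs k) (Z.of_nat N)); auto; lia. }
  exists (exist (fun x : LG => snd x = 0%Z) (dec n, 0%Z) eq_refl).
  exists (exist (fun x : LG => snd x = 0%Z) (gm (gi (dec n, 0%Z)) (h, 0%Z)) eq_refl).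
  split; [|split].
  - apply in_map_iff. exists n. split; [reflexivity|]. apply in_seq. lia.
  - apply HVU. apply HVW. simpl. apply Hb. eapply Rle_lt_trans; [|exact HN].
    apply d_C. rewrite gi1, gm1l. split; [reflexivity|].
    intros k Hk. rewrite Hd. simpl. unfold ev; simpl. fold (ev h).
    destruct (Z.leb_spec (Z.abs (k - - 0)) (Z.of_nat N)); [|lia].
    replace (k - - 0)%Z with k by lia. replace (k - 0)%Z with k by lia.
    destruct (Z.leb_spec (Z.abs k) (Z.of_nat N)); [|lia].
    destruct (proj1_sig h k); reflexivity.
  - apply sig_ext. simpl. rewrite gmA, gmVr, gm1l. reflexivity.
Qed.

Definition SH := subTopGrp LG Hs.

Lemma fs_phi (h : Hc) : finsupp (fun k => if (0 <=? k)%Z then xorb (ev h k) (ev h (k + 1)) else ev h k).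
Proof.
  destruct (proj2_sig h) as [B HB]. exists (Z.abs B). intros k Hk.
  destruct (Z.leb_spec 0 k).
  - unfold ev; rewrite !HB by lia. reflexivity.
  - unfold ev; apply HB; lia.
Qed.
Definition phiH (h : Hc) : Hc := exist _ _ (fs_phi h).
Lemma ev_phiH h k : ev (phiH h) k = if (0 <=? k)%Z then xorb (ev h k) (ev h (k + 1)) else ev h k.
Proof. reflexivity. Qed.

Lemma phiH_hx a b : phiH (hx a b) = hx (phiH a) (phiH b).
Proof.
  apply Hc_eq; intro k. rewrite ev_hx, !ev_phiH, !ev_hx.
  destruct (0 <=? k)%Z; auto.
  destruct (ev a k), (ev b k), (ev a (k+1)), (ev b (k+1)); reflexivity.
Qed.
Lemma phiH_hz : phiH hz = hz. Proof. apply Hc_eq; intro k. rewrite ev_phiH. destruct (0 <=? k)%Z; reflexivity. Qed.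

Lemma tail_const (c : Hc) (k0 : Z) : (forall k, (k0 <= k)%Z -> ev c k = ev c (k + 1)) ->
  ev c k0 = false.
Proof.
  intros H. destruct (proj2_sig c) as [B HB].
  assert (Hi : forall i : nat, ev c k0 = ev c (k0 + Z.of_nat i)).
  { induction i. - f_equal; lia. - rewrite IHi, H by lia. f_equal. lia. }
  rewrite (Hi (Z.to_nat (Z.abs B + Z.abs k0 + 1))). unfold ev; apply HB. lia.
Qed.

Lemma hx_eq_hz a b : hx a b = hz -> a = b.
Proof.
  intros H; apply Hc_eq; intro k. apply (f_equal (fun c => ev c k)) in H.
  rewrite ev_hx, ev_hz in H. destruct (ev a k), (ev b k); auto; discriminate.
Qed.

Lemma phiH_inj a b : phiH a = phiH b -> a = b.
Proof.
  intros H. apply hx_eq_hz. set (c := hx a b).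
  assert (Hc0 : phiH c = hz) by (unfold c; rewrite phiH_hx, H, hxx; reflexivity).
  assert (Hk : forall k, ev (phiH c) k = false) by (rewrite Hc0; reflexivity).
  apply Hc_eq; intro k. rewrite ev_hz. destruct (Z.leb_spec 0 k).
  - apply tail_const with (k0 := k). intros j Hj. specialize (Hk j).
    rewrite ev_phiH in Hk. destruct (Z.leb_spec 0 j); [|lia].
    destruct (ev c j), (ev c (j+1)); auto; discriminate.
  - specialize (Hk k). rewrite ev_phiH in Hk. destruct (Z.leb_spec 0 k); [lia|]. exact Hk.
Qed.

Fixpoint xs (f : nat -> bool) (L : nat) : bool :=
  match L with 0%nat => false | S L' => xorb (f L') (xs f L') end.
Lemma xs_shift L : forall f, xs f (S L) = xorb (f 0%nat) (xs (fun i => f (S i)) L).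
Proof.
  induction L; intros f; simpl in *.
  - reflexivity.
  - rewrite IHL. simpl. destruct (f (S L)), (f 0%nat), (xs (fun i => f (S i)) L); reflexivity.
Qed.
Lemma xs_ext L f g : (forall i, f i = g i) -> xs f L = xs g L.
Proof. intros H; induction L; simpl; auto. rewrite H, IHL; auto. Qed.
Lemma xs_false L f : (forall i, f i = false) -> xs f L = false.
Proof. intros H; induction L; simpl; auto. rewrite H, IHL; auto. Qed.

Lemma phiH_surj y : exists x, phiH x = y.
Proof.
  destruct (proj2_sig y) as [B HB].
  set (L := (Z.to_nat (Z.abs B) + 1)%nat).
  set (g := fun k => if (0 <=? k)%Z then xs (fun i => ev y (k + Z.of_nat i)) L else ev y k).
  assert (Hg : finsupp g).
  { exists (Z.abs B). intros k Hk. unfold g. destruct (Z.leb_spec 0 k).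
    - apply xs_false. intro i. unfold ev; apply HB; lia.
    - unfold ev; apply HB; lia. }
  exists (exist _ g Hg). apply Hc_eq; intro k. rewrite ev_phiH. unfold ev at 1 2; simpl.
  unfold g. destruct (Z.leb_spec 0 k).
  - destruct (Z.leb_spec 0 (k+1)); [|lia].
    assert (E : xs (fun i => ev y (k + 1 + Z.of_nat i)) L =
                xs (fun i => (fun i => ev y (k + Z.of_nat i)) (S i)) L).
    { apply xs_ext; intro i; f_equal; lia. }
    rewrite E. set (f := fun i => ev y (k + Z.of_nat i)).
    pose proof (xs_shift L f) as H1. simpl in H1.
    assert (Hf : f L = false) by (unfold f, ev; apply HB; unfold L; lia).
    rewrite Hf in H1. simpl in H1.
    assert (Hf0 : f 0%nat = ev y k) by (unfold f; f_equal; lia).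
    rewrite Hf0 in H1.
    change (xs (fun i => ev y (k + Z.of_nat (S i))) L) with (xs (fun i => f (S i)) L).
    rewrite H1. destruct (ev y k), (xs (fun i => f (S i)) L); reflexivity.
  - reflexivity.
Qed.

Definition phi (a : SH) : SH :=
  exist (fun x : LG => snd x = 0%Z) (phiH (fst (proj1_sig a)), 0%Z) eq_refl.

Lemma phi_aut : automorphism phi.
Proof.
  split; [|split].
  - intros [[ha za] Ha] [[hb zb] Hb]; simpl in Ha, Hb; subst. apply sig_ext; simpl.
    unfold gm; simpl. rewrite !hs0, phiH_hx. reflexivity.
  - intros [[ha za] Ha] [[hb zb] Hb] H; simpl in Ha, Hb; subst.
    apply (f_equal (fun a => fst (proj1_sig a))) in H; simpl in H.
    apply phiH_inj in H; subst. apply sig_ext; reflexivity.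
  - intros [[hy zy] Hy]; simpl in Hy; subst. destruct (phiH_surj hy) as [x Hx].
    exists (exist (fun x : LG => snd x = 0%Z) (x, 0%Z) eq_refl). apply sig_ext; simpl. rewrite Hx; reflexivity.
Qed.

Lemma agree_V N a b : V N (gm (gi (a, 0%Z)) (b, 0%Z)) <->
  forall k, (Z.abs k <= Z.of_nat N)%Z -> ev a k = ev b k.
Proof.
  split.
  - intros [_ H] k Hk. specialize (H k Hk). simpl in H. unfold ev.
    rewrite ?Z.opp_0, ?Z.sub_0_r in H.
    unfold ev in H. destruct (proj1_sig a k), (proj1_sig b k); simpl in *; congruence.
  - intros H; split; [reflexivity|]. intros k Hk. simpl.
    rewrite ?Z.opp_0, ?Z.sub_0_r. specialize (H k Hk). rewrite H.
    destruct (ev b k); reflexivity.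
Qed.

Lemma phi_agree N a b : (forall k, (Z.abs k <= Z.of_nat (S N))%Z -> ev a k = ev b k) ->
  forall k, (Z.abs k <= Z.of_nat N)%Z -> ev (phiH a) k = ev (phiH b) k.
Proof.
  intros H k Hk. rewrite !ev_phiH. rewrite (H k), (H (k+1)%Z) by lia. reflexivity.
Qed.

Lemma phi_cont : @continuous SH phi.
Proof.
  intros U [W [HW HU]].
  exists (fun g : LG => exists a : SH, proj1_sig a = g /\ U (phi a)). split.
  - intros g [a [Ea Ha]]. subst g. apply HU in Ha.
    destruct (HW _ Ha) as [e [He Hb]]. destruct (small_arch e He) as [N HN].
    exists (small (S N)); split; [apply small_pos|].
    intros [hy zy] Hy. destruct a as [[ha za] Hza]; simpl in Hza; subst za.
    apply d_small in Hy. assert (zy = 0%Z) by (destruct Hy as [H1 _]; simpl in H1; lia). subst zy.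
    exists (exist (fun x : LG => snd x = 0%Z) (hy, 0%Z) eq_refl). split; [reflexivity|].
    apply HU. apply Hb. simpl. eapply Rle_lt_trans; [|exact HN]. apply d_C.
    apply agree_V. apply phi_agree. apply agree_V. exact Hy.
  - intros a; split.
    + intros Ha; exists a; auto.
    + intros [a' [E Ha']]. apply sig_ext in E; subst; auto.
Qed.

Lemma no_pre (c : Hc) (M : nat) : phiH c = he (Z.of_nat M) -> ev c 0 = true.
Proof.
  intros H.
  assert (Hk : forall k, (0 <= k)%Z -> xorb (ev c k) (ev c (k+1)%Z) = Z.eqb k (Z.of_nat M)).
  { intros k Hk. apply (f_equal (fun h => ev h k)) in H. rewrite ev_phiH, ev_he in H.
    destruct (Z.leb_spec 0 k); [exact H|lia]. }
  assert (Ht : ev c (Z.of_nat M + 1) = false).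
  { apply tail_const. intros k Hk0. specialize (Hk k ltac:(lia)).
    destruct (Z.eqb_spec k (Z.of_nat M)); [lia|].
    destruct (ev c k), (ev c (k+1)%Z); simpl in *; congruence. }
  assert (HM : ev c (Z.of_nat M) = true).
  { specialize (Hk (Z.of_nat M) ltac:(lia)). rewrite Z.eqb_refl, Ht in Hk.
    destruct (ev c (Z.of_nat M)); simpl in *; congruence. }
  assert (Hj : forall j, (j <= M)%nat -> ev c (Z.of_nat (M - j)) = true).
  { induction j; intros Hj.
    - rewrite Nat.sub_0_r; exact HM.
    - specialize (IHj ltac:(lia)). specialize (Hk (Z.of_nat (M - S j)) ltac:(lia)).
      replace (Z.of_nat (M - S j) + 1)%Z with (Z.of_nat (M - j)) in Hk by lia.
      destruct (Z.eqb_spec (Z.of_nat (M - S j)) (Z.of_nat M)); [lia|].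
      rewrite IHj in Hk. destruct (ev c (Z.of_nat (M - S j))); simpl in *; congruence. }
  specialize (Hj M (le_n _)). rewrite Nat.sub_diag in Hj. exact Hj.
Qed.

Lemma phi_not_open : ~ @open_map SH phi.
Proof.
  intros Hop.
  set (U := fun a : SH => ev (fst (proj1_sig a)) 0 = false).
  assert (HUo : @opn SH U).
  { exists (fun g : LG => snd g = 0%Z /\ ev (fst g) 0 = false). split.
    - intros [hg zg] [Hz Hg0]; simpl in Hz, Hg0; subst zg.
      exists (small 0); split; [apply small_pos|].
      intros [hy zy] Hy. apply d_small in Hy.
      assert (zy = 0%Z) by (destruct Hy as [H1 _]; simpl in H1; lia). subst zy.
      pose proof (proj1 (agree_V 0 hg hy) Hy) as Hy2. split; [reflexivity|]. simpl. rewrite <- Hy2 by (simpl; lia). exact Hg0.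
    - intros [[h z] Hz]; simpl in Hz; subst z. unfold U; simpl. tauto. }
  destruct (Hop U HUo) as [W [HW HUW]].
  assert (Wge : W ge).
  { apply (HUW (@gone SH)). exists (@gone SH). split; [reflexivity|].
    apply sig_ext; simpl. rewrite phiH_hz. reflexivity. }
  destruct (HW _ Wge) as [e [He Hb]]. destruct (small_arch e He) as [N HN].
  set (aM := exist (fun x : LG => snd x = 0%Z) (he (Z.of_nat (S N)), 0%Z) eq_refl : SH).
  assert (W (proj1_sig aM)).
  { apply Hb. eapply Rle_lt_trans; [|exact HN]. apply d_C. rewrite gi1, gm1l.
    split; [reflexivity|]. intros k Hk. simpl. apply Z.eqb_neq. lia. }
  apply HUW in H. destruct H as [x [Ux Hx]].
  apply (f_equal (fun a => fst (proj1_sig a))) in Hx. simpl in Hx.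
  apply (no_pre _ (S N)) in Hx. unfold U in Ux. exact (diff_true_false (eq_trans (eq_sym Hx) Ux)).
Qed.

Lemma SH_not_rev : ~ g_reversible SH.
Proof. intros H. apply phi_not_open. apply H; [apply phi_aut|apply phi_cont]. Qed.

Lemma ev_restr h N k : ev (restr h N) k = if (Z.abs k <=? Z.of_nat N)%Z then ev h k else false.
Proof. reflexivity. Qed.
Lemma ev_cond (b : bool) j k : ev (if b then he j else hz) k = andb b (Z.eqb k j).
Proof. destruct b; reflexivity. Qed.

Lemma decomp (Q : Hc -> Prop) (M : nat) : Q hz -> (forall b c, Q b -> Q c -> Q (hx b c)) ->
  (forall k, (Z.of_nat M < Z.abs k)%Z -> Q (he k)) ->
  forall b, (forall k, (Z.abs k <= Z.of_nat M)%Z -> ev b k = false) -> Q b.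
Proof.
  intros Q0 Qx Qe b Hlow. destruct (proj2_sig b) as [B HB].
  set (cond := fun k => if ev b k then he k else hz).
  assert (Qc : forall k, Q (cond k)).
  { intros k. unfold cond. destruct (ev b k) eqn:E; auto.
    apply Qe. destruct (Z.le_gt_cases (Z.abs k) (Z.of_nat M)); auto.
    rewrite Hlow in E by auto; discriminate. }
  assert (Main : forall n : nat, forall c, (forall k, (Z.of_nat M < Z.abs k)%Z -> (Z.of_nat n < Z.abs k)%Z -> ev c k = false) ->
     (forall k, ev c k = true -> ev b k = true) -> Q c).
  { induction n; intros c Hc Hcb.
    - replace c with hz; auto. apply Hc_eq; intro k. rewrite ev_hz.
      destruct (ev c k) eqn:E; auto. pose proof (Hcb k E) as E2.
      destruct (Z.le_gt_cases (Z.abs k) (Z.of_nat M)).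
      + rewrite Hlow in E2 by auto; discriminate.
      + destruct (Z.eq_dec k 0); [subst; simpl in *; lia|]. rewrite Hc in E; [discriminate|lia|lia].
    - set (c1 := restr c n).
      set (j := Z.of_nat (S n)).
      set (c2 := hx (if ev c j then he j else hz) (if ev c (- j)%Z then he (- j)%Z else hz)).
      assert (Ec : c = hx c1 c2).
      { apply Hc_eq; intro k. unfold c2, c1. rewrite !ev_hx, ev_restr, !ev_cond.
        destruct (Z.leb_spec (Z.abs k) (Z.of_nat n)).
        - destruct (Z.eqb_spec k j); [unfold j in *; lia|].
          destruct (Z.eqb_spec k (-j)%Z); [unfold j in *; lia|].
          rewrite !andb_false_r; simpl; destruct (ev c k); reflexivity.
        - destruct (Z.eqb_spec k j) as [Ek|Ek].
          + subst k. destruct (Z.eqb_spec j (-j)%Z); [unfold j in *; lia|].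
            rewrite andb_true_r, andb_false_r; simpl; destruct (ev c j); reflexivity.
          + destruct (Z.eqb_spec k (-j)%Z) as [Ek2|Ek2].
            * subst k. rewrite andb_true_r, andb_false_r; simpl; destruct (ev c (-j)%Z); reflexivity.
            * rewrite !andb_false_r; simpl.
              destruct (Z.le_gt_cases (Z.abs k) (Z.of_nat M)) as [h|h].
              -- destruct (ev c k) eqn:E; auto. apply Hcb in E. rewrite Hlow in E by auto; discriminate.
              -- apply Hc; unfold j in *; lia. }
      rewrite Ec. apply Qx.
      + apply IHn.
        * intros k H1 H2. unfold c1; rewrite ev_restr. destruct (Z.leb_spec (Z.abs k) (Z.of_nat n)); auto; lia.
        * intros k. unfold c1; rewrite ev_restr. destruct (Z.leb_spec (Z.abs k) (Z.of_nat n)); [apply Hcb|discriminate].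
      + unfold c2. apply Qx.
        * destruct (ev c j) eqn:E; auto. apply Hcb in E. replace (he j) with (cond j); auto.
          unfold cond; rewrite E; auto.
        * destruct (ev c (-j)%Z) eqn:E; auto. apply Hcb in E. replace (he (-j)%Z) with (cond (-j)%Z); auto.
          unfold cond; rewrite E; auto. }
  apply (Main (Z.to_nat (Z.abs B))); auto.
  intros k _ Hk. apply HB. lia.
Qed.

Lemma he_shift k : he k = hs k (he 0).
Proof. apply Hc_eq; intro j. rewrite ev_hs, !ev_he. destruct (Z.eqb_spec j k), (Z.eqb_spec (j - k) 0); auto; lia. Qed.

Lemma conj_formula c b : gm (gm c (b, 0%Z)) (gi c) = (hs (snd c) b, 0%Z).
Proof.
  destruct c as [a m]. unfold gm, gi; simpl. f_equal; [|lia].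
  rewrite hss. replace (m + 0 + - m)%Z with 0%Z by lia. rewrite hs0.
  rewrite <- hxA, (hxC _ a), hxA, hxx, hx0l. reflexivity.
Qed.

Section Aut.
Variable g : G0 -> G0.
Hypothesis ghom : forall x y, g (gm x y) = gm (g x) (g y).
Hypothesis ginj : forall x y, g x = g y -> x = y.

Lemma g_one : g ge = ge.
Proof.
  apply (gm_cancel_l (g ge)). rewrite <- ghom, gm1l, gm1r. reflexivity.
Qed.
Lemma g_inv x : g (gi x) = gi (g x).
Proof. apply gi_unique. rewrite <- ghom, gmVr. apply g_one. Qed.

Lemma g_char b : snd (g (b, 0%Z)) = 0%Z.
Proof.
  assert (E : gm (b, 0%Z) (b, 0%Z) = ge) by (unfold gm, ge; simpl; rewrite hs0, hxx; reflexivity).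
  apply (f_equal g) in E. rewrite ghom, g_one in E. apply (f_equal snd) in E. simpl in E. lia.
Qed.

Definition psi b := fst (g (b, 0%Z)).
Lemma g_pair b : g (b, 0%Z) = (psi b, 0%Z).
Proof. rewrite (surjective_pairing (g (b, 0%Z))), g_char. reflexivity. Qed.

Definition gj (j : Z) := snd (g (hz, j)).

Lemma psi_shift j b : psi (hs j b) = hs (gj j) (psi b).
Proof.
  assert (E : (hs j b, 0%Z) = gm (gm (hz, j) (b, 0%Z)) (gi (hz, j))) by (rewrite conj_formula; reflexivity).
  unfold psi at 1. rewrite E, !ghom, g_inv, g_pair, conj_formula. reflexivity.
Qed.

Lemma gj_add i j : gj (i + j) = (gj i + gj j)%Z.
Proof.
  unfold gj. replace (hz, (i + j)%Z) with (gm (hz, i) (hz, j)).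
  - rewrite ghom. reflexivity.
  - unfold gm; simpl. rewrite hs_hz, hx0l. reflexivity.
Qed.
Lemma gj_0 : gj 0 = 0%Z.
Proof. unfold gj. change (hz, 0%Z) with ge. rewrite g_one. reflexivity. Qed.
Lemma gj_lin k : gj k = (k * gj 1)%Z.
Proof.
  induction k using Z.peano_ind.
  - rewrite gj_0; lia.
  - rewrite <- Z.add_1_r, gj_add, IHk. lia.
  - assert (E := gj_add (Z.pred k) 1). replace (Z.pred k + 1)%Z with k in E by lia. nia.
Qed.

Lemma gj1_nz : gj 1 <> 0%Z.
Proof.
  intros H. assert (E : psi (hs 1 (he 0)) = psi (he 0)) by (rewrite psi_shift, H, hs0; reflexivity).
  assert (E2 : g (hs 1 (he 0), 0%Z) = g (he 0, 0%Z)) by (rewrite !g_pair, E; reflexivity).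
  apply ginj in E2. apply (f_equal (fun x => ev (fst x) 1)) in E2. simpl in E2. discriminate.
Qed.

Lemma psi_hx b c : psi (hx b c) = hx (psi b) (psi c).
Proof.
  unfold psi at 1. replace (hx b c, 0%Z) with (gm (b, 0%Z) (c, 0%Z)).
  - rewrite ghom, !g_pair. unfold gm; simpl. rewrite hs0. reflexivity.
  - unfold gm; simpl. rewrite hs0. reflexivity.
Qed.
Lemma psi_hz : psi hz = hz.
Proof. unfold psi. change (hz, 0%Z) with ge. rewrite g_one. reflexivity. Qed.

Lemma g_cont1 N : exists M, forall v, V M v -> V N (g v).
Proof.
  destruct (proj2_sig (psi (he 0))) as [P HP].
  exists (N + Z.to_nat (Z.abs P))%nat. intros [b zb] [Hz Hb]; simpl in Hz, Hb; subst zb.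
  rewrite g_pair. split; [reflexivity|]. simpl fst.
  revert b Hb. apply (decomp (fun c => forall i, (Z.abs i <= Z.of_nat N)%Z -> ev (psi c) i = false)).
  - intros i _. rewrite psi_hz. reflexivity.
  - intros b c Hb Hc i Hi. rewrite psi_hx, ev_hx, Hb, Hc; auto.
  - intros k Hk i Hi. rewrite he_shift, psi_shift, ev_hs, gj_lin. unfold ev; apply HP.
    pose proof gj1_nz. assert (Z.abs (k * gj 1) >= Z.abs k)%Z by (rewrite Z.abs_mul; nia).
    lia.
Qed.

Lemma g_cont : @continuous LG g.
Proof.
  intros U HU x Hx; simpl in *.
  destruct (HU _ Hx) as [e [He H]]. destruct (small_arch e He) as [N HN].
  destruct (g_cont1 N) as [M HM]. exists (small M); split; [apply small_pos|].
  intros y Hy. apply H. apply d_small, HM in Hy. rewrite ghom, g_inv in Hy.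
  apply d_C in Hy. lra.
Qed.
End Aut.

Lemma opn_ext (A B : G0 -> Prop) : (forall x, A x <-> B x) -> opn0 A -> opn0 B.
Proof.
  intros E HA x Bx. apply E in Bx. destruct (HA x Bx) as [e [He H]].
  exists e; split; auto. intros y Hy; apply E; auto.
Qed.

Lemma LG_rev : g_reversible LG.
Proof.
  intros f [Hhom [Hinj Hsur]] _. simpl in *.
  set (fi := fun y => proj1_sig (constructive_indefinite_description _ (Hsur y))).
  assert (Hfi : forall y, f (fi y) = y) by (intro y; unfold fi; destruct (constructive_indefinite_description _ _); auto).
  assert (fhom : forall x y, fi (gm x y) = gm (fi x) (fi y)).
  { intros x y. apply Hinj. rewrite Hhom, !Hfi. reflexivity. }
  assert (finj : forall x y, fi x = fi y -> x = y).
  { intros x y H. rewrite <- (Hfi x), <- (Hfi y), H. reflexivity. }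
  intros U HU. apply (opn_ext (fun y => U (fi y))).
  - intros y; split.
    + intros H; exists (fi y); auto.
    + intros [x [Ux Ex]]. subst y. replace (fi (f x)) with x; [exact Ux|].
      apply Hinj. rewrite Hfi; reflexivity.
  - apply (g_cont fi fhom finj U HU).
Qed.

Theorem corollary8p3 :
  exists G : TopGrp,
    is_topological_group G /\ separable G /\ metrizable G /\ g_reversible G /\
    exists H : subgroup G,
      closed_subset (sg_pred H) /\ countable_set (sg_pred H) /\
      precompact (subTopGrp G H) /\ ~ g_reversible (subTopGrp G H).
Proof.
  exists LG. split; [apply LG_tg|]. split; [apply LG_sep|]. split; [apply LG_metr|].
  split; [apply LG_rev|]. exists Hs. split; [apply Hs_closed|]. split; [apply Hs_count|].
  split; [apply Hs_precompact|apply SH_not_rev].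
Qed.
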